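(* For every $m\ge 1$ there is a market with $m$ items and $m+1$ unit-demand buyers whose maximum social welfare is $m+o(1)$ (as $m\to\infty$) such that: for some fixed selling order of the items there exists a subgame perfect equilibrium of the sequential first-price auction with revenue $1$, while for a different fixed selling order every subgame perfect equilibrium has revenue at least $m$.
   Context: Unit demand: buyer $i$ has values $v_{i,j}\ge0$ and $v_i(S)=\max_{j\in S}v_{i,j}$, $v_i(\emptyset)=0$; utility is quasi-linear. In a sequential first-price auction the items are sold one at a time in the given selling order, each by a sealed-bid first-price auction without reserve price: each buyer submits a nonnegative bid, a highest bidder wins (ties broken by a seller-chosen rule) and pays his bid. Full information. A subgame perfect equilibrium is a (pure) strategy profile that is a Nash equilibrium in every subgame; its revenue is the total payment on the equilibrium path. Social welfare is the sum of buyers' values for their bundles. *)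

(* Defs.v *)
From HB Require Import structures.
From mathcomp Require Import all_boot all_order all_algebra all_fingroup.
From mathcomp Require Import reals.
Set Implicit Arguments. Unset Strict Implicit. Unset Printing Implicit Defensive.
Import Order.TTheory GRing.Theory Num.Theory.
Local Open Scope ring_scope.

(* Sequential first-price auctions with unit-demand buyers, full information.
   Buyers are 'I_n, items are 'I_m.  Stage k (k < m) sells item (sigma k). *)
Section SeqAuction.
Variables (R : realType) (n m : nat).

Definition profile := {ffun 'I_n -> R}.
(* a history = the bid profiles of all previous stages (full information) *)
Definition history := seq profile.
Definition strategy := history -> R.
Definition nonneg_strategy (f : strategy) := forall h, 0 <= f h.
Definition nonneg_history (h : history) := all (fun b : profile => [forall i, 0 <= b i]) h.

(* seller-chosen tie-breaking rule: picks a highest bidder (may depend on history) *)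
Definition tie_rule := history -> profile -> 'I_n.
Definition valid_tie (t : tie_rule) := forall h (b : profile) j, b j <= b (t h b).

Definition bids_at (s : 'I_n -> strategy) (h : history) : profile := [ffun i => s i h].

Fixpoint run (s : 'I_n -> strategy) (k : nat) (h : history) : history :=
  if k is k'.+1 then run s k' (rcons h (bids_at s h)) else h.

Definition play (s : 'I_n -> strategy) (h : history) : history := run s (m - size h) h.

Definition update (s : 'I_n -> strategy) (i : 'I_n) (d : strategy) : 'I_n -> strategy :=
  fun j => if j == i then d else s j.

Variables (v : 'I_n -> 'I_m -> R) (sigma : {perm 'I_m}) (t : tie_rule).

Definition bidk (H : history) (k : 'I_m) : profile := nth [ffun=> 0] H k.
Definition winner (H : history) (k : 'I_m) : 'I_n := t (take k H) (bidk H k).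
Definition price (H : history) (k : 'I_m) : R := bidk H k (winner H k).

(* unit-demand value of the bundle won by i, payment, quasi-linear utility *)
Definition bundle_value (H : history) (i : 'I_n) : R :=
  \big[Num.max/0]_(k < m | winner H k == i) v i (sigma k).
Definition payment (H : history) (i : 'I_n) : R :=
  \sum_(k < m | winner H k == i) price H k.
Definition utility (H : history) (i : 'I_n) : R := bundle_value H i - payment H i.
Definition revenue (H : history) : R := \sum_(k < m) price H k.

Definition SPE (s : 'I_n -> strategy) : Prop :=
  (forall i, nonneg_strategy (s i)) /\
  forall h : history, nonneg_history h -> (size h < m)%N ->
  forall (i : 'I_n) (d : strategy), nonneg_strategy d ->
    utility (play (update s i d) h) i <= utility (play s h) i.

Definition eq_revenue (s : 'I_n -> strategy) : R := revenue (play s [::]).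

End SeqAuction.

Section Welfare.
Variables (R : realType) (n m : nat) (v : 'I_n -> 'I_m -> R).
(* social welfare of an allocation of all items (values are >= 0, so
   leaving items unallocated never helps) *)
Definition alloc_welfare (a : {ffun 'I_m -> 'I_n}) : R :=
  \sum_(i < n) \big[Num.max/0]_(j < m | a j == i) v i j.
Definition opt_welfare : R := \big[Num.max/0]_(a : {ffun 'I_m -> 'I_n}) alloc_welfare a.
End Welfare.

(* Main.v *)
Require Import Defs.
From HB Require Import structures.
From mathcomp Require Import all_boot all_order all_algebra all_fingroup.
From mathcomp Require Import reals.
From mathcomp Require Import lra zify ring.
Set Implicit Arguments. Unset Strict Implicit. Unset Printing Implicit Defensive.
Import Order.TTheory GRing.Theory Num.Theory.
Local Open Scope ring_scope.


Section Runs.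
Variables (R : realType) (n : nat).
Implicit Types (s : 'I_n -> strategy R n) (h : history R n).

Definition step s h : history R n := rcons h (bids_at s h).

Lemma runE s j h : run s j h = iter j (step s) h.
Proof. elim: j h => [|j IH] h //. by rewrite -[RHS]/(iter j.+1 _ _) iterSr -IH. Qed.

Lemma size_iter s j h : size (iter j (step s) h) = (size h + j)%N.
Proof. by elim: j => [|j IH]; rewrite ?addn0 //= /step size_rcons IH addnS. Qed.

Lemma iter_prefix s j h : exists e, iter j (step s) h = h ++ e.
Proof.
elim: j => [|j [e IH]]; first by exists [::]; rewrite cats0.
by exists (rcons e (bids_at s (h ++ e))); rewrite /= IH /step rcons_cat.
Qed.

Lemma take_iter s j h : take (size h) (iter j (step s) h) = h.
Proof. by have [e ->] := iter_prefix s j h; rewrite take_size_cat. Qed.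

Lemma iter_nth s j h l : (size h <= l < size h + j)%N ->
  nth [ffun=> 0] (iter j (step s) h) l = bids_at s (take l (iter j (step s) h)).
Proof.
elim: j h => [|j IH] h /andP[h1 h2]; first by rewrite addn0 ltnNge h1 in h2.
rewrite iterSr.
have [->|hl] := eqVneq l (size h).
  have [e ->] := iter_prefix s j (step s h).
  by rewrite /step -cats1 -catA nth_cat ltnn subnn take_size_cat.
rewrite IH // /step size_rcons ltn_neqAle eq_sym hl h1 /=.
by rewrite addSnnS.
Qed.

Lemma take_iter_le s j h l : (l <= size h)%N -> take l (iter j (step s) h) = take l h.
Proof. by move=> hl; have [e ->] := iter_prefix s j h; rewrite take_cat ltn_neqAle hl andbT;
  case: eqP => [->|//]; rewrite subnn take0 cats0 take_size. Qed.

Lemma iter_add s a b h : iter (a + b) (step s) h = iter a (step s) (iter b (step s) h).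
Proof. by rewrite iterD. Qed.

End Runs.


Section Dev.
Variables (R : realType) (n m : nat).
Implicit Types (s : 'I_n -> strategy R n) (h : history R n).

Lemma playE s h : play m s h = iter (m - size h) (step s) h.
Proof. by rewrite /play runE. Qed.

Lemma size_play s h : (size h <= m)%N -> size (play m s h) = m.
Proof. by move=> hs; rewrite playE size_iter subnKC. Qed.

Lemma play_step s h : (size h < m)%N -> play m s h = play m s (step s h).
Proof.
move=> hs; rewrite !playE /step size_rcons subnS.
case E: (m - size h)%N => [|j]; first by move/eqP: E; rewrite subn_eq0 leqNgt hs.
by rewrite iterSr.
Qed.

Lemma take_play0 s j : (j <= m)%N -> take j (play m s [::]) = iter j (step s) [::].
Proof.
move=> hj; rewrite playE /= subn0 -(subnK hj) iter_add.
have := take_iter s (m - j) (iter j (step s) [::]).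
by rewrite size_iter.
Qed.

Lemma play_take s j : (j <= m)%N -> play m s (take j (play m s [::])) = play m s [::].
Proof.
move=> hj; rewrite take_play0 // !playE size_iter /= subn0 add0n -iter_add subnK //.
Qed.

Lemma nth_play0 s l : (l < m)%N ->
  nth [ffun=> 0] (play m s [::]) l = bids_at s (take l (play m s [::])).
Proof. by move=> hl; rewrite playE /= subn0 iter_nth //= add0n. Qed.

Definition win (t : tie_rule R n) (H : history R n) (k : nat) : 'I_n :=
  t (take k H) (nth [ffun=> 0] H k).

End Dev.


Section Dev2.
Variables (R : realType) (n m : nat) (v : 'I_n -> 'I_m -> R) (sigma : {perm 'I_m})
  (t : tie_rule R n).
Implicit Types (s : 'I_n -> strategy R n) (h : history R n).

Lemma dev_x s (k : 'I_m) (i : 'I_n) (x : R) :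
  SPE v sigma t s -> valid_tie t ->
  (forall k' : 'I_m, (k' < k)%N -> winner t (play m s [::]) k' != i) ->
  price t (play m s [::]) k < x ->
  v i (sigma k) - x <= utility v sigma t (play m s [::]) i.
Proof.
move=> [snn spe] vt nowin hx.
set H := play m s [::].
set h := take k H.
have sizeH : size H = m by rewrite size_play.
have sh : size h = k by rewrite size_take sizeH ltn_ord.
pose d : strategy R n := fun g => if size g == k then x else 0.
have bH : nth [ffun=> 0] H k = bids_at s h by rewrite nth_play0.
have pnn : 0 <= price t H k.
  by rewrite /price /bidk bH ffunE; apply: snn.
have dnn : nonneg_strategy d by move=> g; rewrite /d; case: ifP => //; lra.
have hnn : nonneg_history h.
  apply/allP => b /(nthP [ffun=> 0]) [l]; rewrite sh => hl <-.
  apply/forallP => j.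
  have hlm : (l < m)%N by apply: ltn_trans hl (ltn_ord k).
  rewrite nth_take // (nth_play0 _ hlm) ffunE; exact: snn.
have hsz : (size h < m)%N by rewrite sh ltn_ord.
have Hle := spe h hnn hsz i d dnn.
have eH : play m s h = H by rewrite /h /H play_take // ltnW.
rewrite eH in Hle.
set s' := update s i d in Hle.
set H' := play m s' h in Hle.
apply: le_trans Hle.
have km : (k <= m)%N by apply: ltnW.
have sizeH' : size H' = m by rewrite /H' size_play // sh.
have H'E : H' = iter (m - k) (step s') h by rewrite /H' playE sh.
have tk : take k H' = h by rewrite H'E -{1}sh take_iter.
have nthH'k : nth [ffun=> 0] H' k = bids_at s' h.
  rewrite H'E iter_nth; first by rewrite -H'E tk.
  by rewrite sh; have := ltn_ord k; lia.
have nthH'l : forall l, (k < l < m)%N -> nth [ffun=> 0] H' l i = 0.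
  move=> l /andP[kl lm]; rewrite H'E iter_nth; [|by rewrite sh; lia].
  rewrite ffunE /s' /update eqxx /d size_take size_iter sh subnKC //.
  by rewrite lm (gtn_eqF kl).
have pref : forall l : 'I_m, (l < k)%N -> winner t H' l = winner t H l.
  move=> l lk; rewrite /winner /bidk.
  have e1 : take l H' = take l H.
    by rewrite -(take_takel H' (ltnW lk)) tk /h take_takel // ltnW.
  have e2 : nth [ffun=> 0] H' l = nth [ffun=> 0] H l.
    by rewrite -(nth_take _ lk) tk /h nth_take.
  by rewrite e1 e2.
have wk : winner t H' k = i.
  rewrite /winner /bidk tk nthH'k.
  apply/eqP; apply/negPn/negP => ne.
  have := vt h (bids_at s' h) i.
  rewrite !ffunE /s' /update eqxx (negbTE ne) /d sh eqxx => hle.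
  have := vt h (bids_at s h) (t h (bids_at s' h)).
  rewrite ffunE.
  move: hx; rewrite /price /winner /bidk -/H bH -/h => hx.
  rewrite /s' /update in hle.
  lra.
have px : price t H' k = x.
  by rewrite /price wk /bidk nthH'k ffunE /s' /update eqxx /d sh eqxx.
have pay : utility v sigma t H' i = bundle_value v sigma t H' i - x.
  rewrite /utility; congr (_ - _).
  rewrite /payment (bigD1 k) ?wk ?eqxx //= px big1 ?addr0 // => l /andP[/eqP wl lk].
  have [ltlk|gtlk|eqlk] := ltngtP l k.
  - by move: (nowin l ltlk); rewrite -pref // wl eqxx.
  - by rewrite /price /bidk wl nthH'l // gtlk ltn_ord.
  - by move: lk; rewrite -(inj_eq val_inj) /= eqlk eqxx.
have bv : v i (sigma k) <= bundle_value v sigma t H' i.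
  by apply: (@le_bigmax_cond _ _ _ 0 k (fun l => winner t H' l == i) (fun l => v i (sigma l))); rewrite /= wk.
by rewrite pay; lra.
Qed.
Lemma dev s (k : 'I_m) (i : 'I_n) :
  SPE v sigma t s -> valid_tie t ->
  (forall k' : 'I_m, (k' < k)%N -> winner t (play m s [::]) k' != i) ->
  v i (sigma k) - price t (play m s [::]) k <= utility v sigma t (play m s [::]) i.
Proof.
move=> hs vt nw.
set p := price _ _ _; set U := utility _ _ _ _ _.
case: (lerP (v i (sigma k) - p) U) => // hlt.
have := dev_x (x := p + (v i (sigma k) - p - U) / 2) hs vt nw.
rewrite -/p -/U; move=> h; have : p < p + (v i (sigma k) - p - U) / 2 by lra.
move/h; lra.
Qed.
End Dev2.


Definition Vv (R : realType) (k : nat) (i : 'I_k.+2) (j : 'I_k.+1) : R :=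
  if i != ord_max then 1 else ((j : nat) == 0%N)%:R.

Definition Cb (k : nat) (c : 'I_k.+1) : 'I_k.+2 := widen_ord (leqnSn _) c.

Lemma Cb_inj k : injective (@Cb k).
Proof. by move=> a b /(congr1 val) /= /val_inj. Qed.

Lemma Cb_neq k (c : 'I_k.+1) : Cb c != ord_max.
Proof. by rewrite -(inj_eq val_inj) /= neq_ltn ltn_ord. Qed.

Lemma Vv_le1 (R : realType) k i j : @Vv R k i j <= 1.
Proof. by rewrite /Vv; case: ifP => // _; case: eqP. Qed.

Lemma Vv_ge0 (R : realType) k i j : 0 <= @Vv R k i j.
Proof. by rewrite /Vv; case: ifP => // _; case: eqP. Qed.

Definition sig2 (k : nat) : {perm 'I_k.+1} := perm (@rev_ord_inj k.+1).

Section Sig2.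
Variables (R : realType) (k : nat).
Local Notation m := k.+1.
Local Notation n := k.+2.

Lemma util_nowin (v : 'I_n -> 'I_m -> R) sigma t (H : history R n) i :
  (forall l : 'I_m, winner t H l != i) -> utility v sigma t H i = 0.
Proof.
move=> nw; rewrite /utility /bundle_value /payment !big_pred0 ?subr0 //;
  by move=> l; apply/negbTE.
Qed.

Lemma sig2_rev t s : valid_tie t -> SPE (@Vv R k) (sig2 k) t s ->
  m%:R <= eq_revenue m t s.
Proof.
move=> vt hs.
set H := play m s [::].
suff P1 : forall l : 'I_m, 1 <= price t H l.
  rewrite /eq_revenue /revenue -/H.
  have -> : m%:R = \sum_(l < m) (1 : R) by rewrite sumr_const card_ord.
  by apply: ler_sum => l _; apply: P1.
case: (boolP [exists c : 'I_m, [forall l : 'I_m, winner t H l != Cb c]]).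
  case/existsP=> c /forallP nw l.
  have := @dev R n m (@Vv R k) (sig2 k) t s l (Cb c) hs vt (fun k' _ => nw k').
  rewrite -/H util_nowin // /Vv Cb_neq; lra.
rewrite negb_exists => /forallP allw.
have ex : forall c : 'I_m, exists l : 'I_m, winner t H l == Cb c.
  by move=> c; move: (allw c); rewrite negb_forall => /existsP [l]; rewrite negbK; exists l.
pose g (c : 'I_m) : 'I_m := odflt ord0 [pick l | winner t H l == Cb c].
have gP : forall c, winner t H (g c) = Cb c.
  move=> c; rewrite /g; case: pickP => [l /eqP //|none].
  by case: (ex c) => l; rewrite none.
have ginj : injective g.
  by move=> a b e; apply: Cb_inj; rewrite -!gP e.
have gonto : forall l : 'I_m, exists c : 'I_m, g c = l.
  move=> l; have := inj_card_onto ginj (leqnn _) l.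
  by case/codomP => c ->; exists c.
have wC : forall l : 'I_m, exists c : 'I_m, winner t H l = Cb c.
  by move=> l; case: (gonto l) => c <-; exists c; apply: gP.
have nB : forall l : 'I_m, winner t H l != ord_max.
  by move=> l; case: (wC l) => c ->; apply: Cb_neq.
pose L : 'I_m := ord_max.
have pL : 1 <= price t H L.
  have := @dev R n m (@Vv R k) (sig2 k) t s L ord_max hs vt (fun k' _ => nB k').
  rewrite -/H util_nowin // /Vv eqxx /sig2 permE /= subnn eqxx.
  have e : (true%:R : R) = 1 by [].
  move=> hh; rewrite e in hh; lra.
case: (wC L) => cL wL.
have onlyL : forall l : 'I_m, winner t H l = Cb cL -> l = L.
  move=> l wl; case: (gonto l) => c gc.
  have : Cb c = Cb cL by rewrite -gP gc.
  move/Cb_inj => ec; case: (gonto L) => c' gc'.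
  have : Cb c' = Cb cL by rewrite -gP gc'.
  by move/Cb_inj => ec'; rewrite -gc -gc' ec ec'.
have UcL : utility (@Vv R k) (sig2 k) t H (Cb cL) <= 1 - price t H L.
  rewrite /utility.
  have b1 : bundle_value (@Vv R k) (sig2 k) t H (Cb cL) <= 1.
    by apply: bigmax_le => //= l _; apply: Vv_le1.
  have pe : @payment R n m t H (Cb cL) = price t H L.
    rewrite /payment (bigD1 L) ?wL ?eqxx //= big1 ?addr0 // => l /andP[/eqP wl ln].
    by move: ln; rewrite (onlyL _ wl) eqxx.
  rewrite pe; lra.
move=> l; have [->//|lL] := eqVneq l L.
have nw : forall k' : 'I_m, (k' < l)%N -> winner t H k' != Cb cL.
  move=> k' kl; apply/eqP => /onlyL ek.
  by move: kl; rewrite ek ltnNge -ltnS ltn_ord.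
have := @dev R n m (@Vv R k) (sig2 k) t s l (Cb cL) hs vt nw; rewrite -/H /Vv Cb_neq; lra.
Qed.
End Sig2.


Section Welf.
Variables (R : realType) (k : nat).
Local Notation m := k.+1.
Local Notation n := k.+2.

Lemma max_le_sum (F : 'I_m -> R) (P : pred 'I_m) : (forall j, 0 <= F j) ->
  \big[Num.max/0]_(j | P j) F j <= \sum_(j | P j) F j.
Proof.
move=> F0; apply: bigmax_le; first by apply: sumr_ge0.
move=> j Pj; rewrite (bigD1 j) //=; rewrite lerDl; apply: sumr_ge0 => ? _; exact: F0.
Qed.

Lemma alloc_le (a : {ffun 'I_m -> 'I_n}) : alloc_welfare (@Vv R k) a <= m%:R.
Proof.
rewrite /alloc_welfare.
apply: (@le_trans _ _ (\sum_(i < n) \sum_(j | a j == i) @Vv R k i j)).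
  by apply: ler_sum => i _; apply: max_le_sum => j; apply: Vv_ge0.
have E : \sum_(j < m) @Vv R k (a j) j = \sum_(i < n) \sum_(j | a j == i) @Vv R k i j.
  rewrite (partition_big (fun j => a j) xpredT) //=.
  by apply: eq_bigr => i _; apply: eq_big => [j|j /eqP ->] //.
rewrite -E.
have -> : m%:R = \sum_(j < m) (1 : R) by rewrite sumr_const card_ord.
by apply: ler_sum => j _; apply: Vv_le1.
Qed.

Lemma opt_eq : opt_welfare (@Vv R k) = m%:R.
Proof.
apply/le_anti/andP; split.
  by apply: bigmax_le => //= a _; apply: alloc_le.
pose a0 : {ffun 'I_m -> 'I_n} := [ffun j => Cb j].
apply: (le_trans _ (le_bigmax _ _ a0)).
rewrite /alloc_welfare big_ord_recr /=.
have -> : m%:R = \sum_(j < m) (1 : R) + 0 by rewrite sumr_const card_ord addr0.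
apply: lerD.
  apply: ler_sum => c _.
  apply: (le_trans _ (@le_bigmax_cond _ _ _ 0 c _ _ _)); last by rewrite ffunE.
  by rewrite /Vv Cb_neq.
apply: (big_ind (fun x => 0 <= x)) => //; last by move=> j _; apply: Vv_ge0.
by move=> x y hx hy; rewrite le_max hx.
Qed.
End Welf.


Section Sig1.
Variables (R : realType) (k : nat).
Local Notation m := k.+1.
Local Notation n := k.+2.
Local Notation prof := (profile R n).
Local Notation hist := (history R n).
Implicit Types (h : hist) (b : prof).

Definition amax b : 'I_n := [arg max_(j > ord0) b j]%O.

Lemma amaxP b j : b j <= b (amax b).
Proof. rewrite /amax; case: arg_maxP => // i _ H; exact: H. Qed.

Definition chooseb (S : {set 'I_n}) b : 'I_n :=
  if [pick j | (b (amax b) <= b j) && (j != ord_max) && (j \notin S)] is Some j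
  then j else amax b.

Lemma ch1 (S : {set 'I_n}) b j : b j <= b (chooseb S b).
Proof.
rewrite /chooseb; case: pickP => [j' /andP[/andP[h _] _]|_]; last exact: amaxP.
exact: le_trans (amaxP b j) h.
Qed.

Lemma ch2 (S : {set 'I_n}) b j : j != ord_max -> j \notin S -> (forall j', b j' <= b j) ->
  (chooseb S b != ord_max) && (chooseb S b \notin S).
Proof.
move=> jC jS jm; rewrite /chooseb; case: pickP => [j' /andP[/andP[_ ->] ->]//|].
by move=> /(_ j); rewrite jm jC jS.
Qed.

Definition wonset h : {set 'I_n} := foldl (fun S b => S :|: [set chooseb S b]) set0 h.
Definition tie : tie_rule R n := fun h b => chooseb (wonset h) b.

Lemma tie_valid : valid_tie tie.
Proof. by move=> h b j; apply: ch1. Qed.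

Lemma wonset_rcons h b : wonset (rcons h b) = wonset h :|: [set tie h b].
Proof. by rewrite /wonset foldl_rcons. Qed.

Lemma wonset0 : wonset [::] = set0.
Proof. by []. Qed.

Lemma win_rcons_lt h b l : (l < size h)%N -> win tie (rcons h b) l = win tie h l.
Proof.
move=> hl; rewrite /win.
have e1 : take l (rcons h b) = take l h by rewrite -cats1 takel_cat // ltnW.
have e2 : nth [ffun=> 0] (rcons h b) l = nth [ffun=> 0] h l by rewrite nth_rcons hl.
by rewrite e1 e2.
Qed.

Lemma win_rcons_eq h b : win tie (rcons h b) (size h) = tie h b.
Proof.
rewrite /win.
have e1 : take (size h) (rcons h b) = h by rewrite -cats1 take_size_cat.
have e2 : nth [ffun=> 0] (rcons h b) (size h) = b by rewrite nth_rcons ltnn eqxx.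
by rewrite e1 e2.
Qed.

Definition unsat h : {set 'I_n} := [set j | (j != ord_max) && (j \notin wonset h)].
Definition isfree h : bool := (#|unsat h| <= m - size h)%N.

Lemma unsat_rcons h b : unsat (rcons h b) = unsat h :\ tie h b.
Proof.
apply/setP => j; rewrite !inE wonset_rcons !inE negb_or.
by case: (j != ord_max); case: (j \in wonset h); case: eqVneq.
Qed.

Definition strat1 (i : 'I_n) : strategy R n := fun h =>
  if size h == 0%N then ((i == ord0) || (i == ord_max))%:R
  else ((i \in unsat h) && ~~ isfree h)%:R.

Lemma strat_nn i : nonneg_strategy (strat1 i).
Proof. by move=> h; rewrite /strat1; case: ifP => _; apply: ler0n. Qed.

Definition pay h i : R :=
  \sum_(0 <= l < size h | win tie h l == i) (nth [ffun=> 0] h l) (win tie h l).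
Definition vb h i : bool :=
  if i != ord_max then i \in wonset h else (0 < size h)%N && (win tie h 0 == i).
Definition newv h i : bool := if i != ord_max then i \notin wonset h else size h == 0%N.
Definition pu h i : R := (vb h i)%:R - pay h i.
Definition gain h i : R := ((i \in unsat h) && isfree h)%:R.

Lemma pay_rcons h b i : pay (rcons h b) i = pay h i + (tie h b == i)%:R * b i.
Proof.
rewrite /pay size_rcons big_mkcond big_nat_recr //= [in RHS]big_mkcond.
congr (_ + _).
  apply: eq_big_nat => l /andP[_ hl]; rewrite win_rcons_lt //.
  by rewrite nth_rcons hl.
rewrite win_rcons_eq nth_rcons ltnn eqxx.
by case: eqP => [->|_]; rewrite ?mul1r ?mul0r.
Qed.

Lemma vb_rcons h b i : vb (rcons h b) i = vb h i || ((tie h b == i) && newv h i).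
Proof.
rewrite /vb /newv; case: ifP => iC.
  by rewrite wonset_rcons !inE; case: (i \in wonset h); case: eqVneq.
case: h => [|b0 h].
  by have := win_rcons_eq [::] b => /= ->; rewrite andbT.
by rewrite win_rcons_lt //= andbF orbF.
Qed.

Lemma newv_vb h i : newv h i -> vb h i = false.
Proof.
rewrite /newv /vb; case: ifP => _; first by move/negbTE.
by move/eqP->.
Qed.

Lemma pu_rcons h b i :
  pu (rcons h b) i = pu h i + (tie h b == i)%:R * ((newv h i)%:R - b i).
Proof.
rewrite /pu pay_rcons vb_rcons.
case E: (newv h i); first rewrite (newv_vb E);
  case: (tie h b == i); case: (vb h i) => /=; rewrite ?andbF ?andbT /=; lra.
Qed.

End Sig1.


Section Eq1.
Variables (R : realType) (k : nat).
Local Notation m := k.+1.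
Local Notation n := k.+2.
Local Notation prof := (profile R n).
Local Notation hist := (history R n).
Implicit Types (h : hist) (b : prof).
Local Notation strat := (@strat1 R k).
Local Notation tie := (@tie R k).
Local Notation unsat := (@unsat R k).
Local Notation isfree := (@isfree R k).

Lemma bidsE h j : (0 < size h)%N ->
  bids_at strat h j = ((j \in unsat h) && ~~ isfree h)%:R.
Proof. by move=> h0; rewrite ffunE /strat1 (negbTE (lt0n_neq0 h0)). Qed.

Lemma tie_unsat h j0 : (0 < size h)%N -> j0 \in unsat h ->
  tie h (bids_at strat h) \in unsat h.
Proof.
move=> h0 hj0.
have := hj0; rewrite inE => /andP[j0C j0W].
have := @ch2 R k (wonset h) (bids_at strat h) j0 j0C j0W.
rewrite inE.
apply.
move=> j'; rewrite !bidsE // hj0 /=.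
by case: (isfree h); case: (j' \in unsat h).
Qed.

Lemma card_unsat_step h w : w \in unsat h -> #|unsat h :\ w| = (#|unsat h|).-1.
Proof. by move=> hw; rewrite (cardsD1 w (unsat h)) hw. Qed.

Lemma play_pu h i : (0 < size h)%N -> (size h <= m)%N ->
  pu (play m strat h) i = pu h i + gain h i.
Proof.
move=> h0 hm.
move ej: (m - size h)%N => j.
elim: j h h0 hm ej => [|j IH] h h0 hm ej.
  rewrite playE ej /=.
  suff -> : gain h i = 0 by rewrite addr0.
  rewrite /gain /isfree ej leqn0 cards_eq0.
  by case: (boolP (unsat h == set0)) => [/eqP-> | _]; rewrite ?inE ?andbF.
have hlt : (size h < m)%N by lia.
rewrite play_step // IH; last first.
- by rewrite /step size_rcons; lia.
- by rewrite /step size_rcons.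
- by rewrite /step size_rcons.
rewrite /step pu_rcons.
set b := bids_at strat h; set w := tie h b.
have gE : gain (rcons h b) i = ((i \in unsat h :\ w) && isfree (rcons h b))%:R.
  by rewrite /gain unsat_rcons.
have fE : isfree (rcons h b) = (#|unsat h :\ w| <= m - (size h).+1)%N.
  by rewrite /isfree unsat_rcons size_rcons.
case: (set_0Vmem (unsat h)) => [U0|[j0 hj0]].
  have wn : newv h w = false.
    rewrite /newv; case: ifP => wC; last by rewrite (negbTE (lt0n_neq0 h0)).
    have : w \notin unsat h by rewrite U0 inE.
    by rewrite inE wC /= negbK => ->.
  have bi : b i = 0 by rewrite /b bidsE // U0 inE.
  rewrite gE /gain U0 !inE /= !andbF /=.
  case: (eqVneq w i) => [ewi|ne].
    have wn' : newv h i = false by rewrite -ewi.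
    by rewrite wn' bi /= ?mulr1n ?mulr0n; lra.
  by rewrite /= ?mulr1n ?mulr0n; lra.
have wU : w \in unsat h by apply: tie_unsat hj0.
have wn : newv h w = true.
  by move: wU; rewrite inE /newv => /andP[-> ->].
have cu := card_unsat_step wU.
have u1 : (0 < #|unsat h|)%N by apply/card_gt0P; exists j0.
case fh: (isfree h).
  have bz : forall j1, b j1 = 0 by move=> j1; rewrite /b bidsE // fh andbF.
  have f' : isfree (rcons h b).
    by rewrite fE cu; move: fh; rewrite /isfree; lia.
  rewrite gE f' bz /gain fh in_setD1 !andbT.
  case: (eqVneq w i) => [ewi|ne].
    have wn' : newv h i = true by rewrite -ewi.
    have wU' : i \in unsat h by rewrite -ewi.
    by rewrite wn' wU' /= ?mulr1n ?mulr0n; lra.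
  by rewrite /= ?mulr1n ?mulr0n; lra.
have bw : b w = 1 by rewrite /b bidsE // wU fh.
have f' : isfree (rcons h b) = false.
  apply/negbTE; rewrite fE cu -ltnNge; move/negbT: fh; rewrite /isfree -ltnNge; lia.
rewrite gE f' /gain fh !andbF.
case: (eqVneq w i) => [ewi|ne].
  have wn' : newv h i = true by rewrite -ewi.
  have bw' : b i = 1 by rewrite -ewi.
  by rewrite wn' bw' /= ?mulr1n ?mulr0n; lra.
by rewrite /= ?mulr1n ?mulr0n; lra.
Qed.

End Eq1.


Section Eq2.
Variables (R : realType) (k : nat).
Local Notation m := k.+1.
Local Notation n := k.+2.
Local Notation prof := (profile R n).
Local Notation hist := (history R n).
Implicit Types (h : hist) (b : prof).
Local Notation strat := (@strat1 R k).
Local Notation tie := (@tie R k).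
Local Notation unsat := (@unsat R k).
Local Notation isfree := (@isfree R k).

Lemma wonsetP h i : (i \in wonset h) = has (fun l => win tie h l == i) (iota 0 (size h)).
Proof.
elim/last_ind: h => [|h b IH]; first by rewrite wonset0 in_set0.
have -> : iota 0 (size (rcons h b)) = iota 0 (size h) ++ [:: size h].
  by rewrite size_rcons -addn1 iotaD.
rewrite wonset_rcons in_setU in_set1 IH has_cat /= orbF.
rewrite win_rcons_eq eq_sym; congr (_ || _).
apply: eq_in_has => l; rewrite mem_iota /= add0n => hl.
by rewrite win_rcons_lt.
Qed.

Lemma utility_final H i : size H = m ->
  utility (@Vv R k) 1%g tie H i = pu H i.
Proof.
move=> sH; rewrite /utility /pu; congr (_ - _); last first.
  by rewrite /payment /pay sH big_mkord.
rewrite /bundle_value /vb.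
have Vle : forall l, @Vv R k i ((1%g : {perm 'I_m}) l) <= 1 by move=> l; apply: Vv_le1.
have ub : \big[Num.max/0]_(l < m | winner tie H l == i) @Vv R k i ((1%g : {perm 'I_m}) l) <= 1.
  by apply: bigmax_le => // l _; apply: Vle.
have lb : 0 <= \big[Num.max/0]_(l < m | winner tie H l == i) @Vv R k i ((1%g : {perm 'I_m}) l).
  apply: (big_ind (fun x => 0 <= x)) => //; last by move=> l _; apply: Vv_ge0.
  by move=> x y hx hy; rewrite le_max hx.
case: ifP => iC.
  rewrite wonsetP sH.
  case: hasP => [[l]|nh].
    rewrite mem_iota add0n /= => hl wl.
    apply/le_anti; rewrite ub /=.
    apply: le_trans (@le_bigmax_cond _ _ _ 0 (Ordinal hl) _ _ _); last exact: wl.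
    by rewrite perm1 /Vv iC.
  rewrite big_pred0 // => l; apply/negbTE/negP => wl; apply: nh.
  by exists (nat_of_ord l); rewrite // mem_iota add0n ltn_ord.
rewrite sH /=.
case: (boolP (win tie H 0 == i)) => w0.
  apply/le_anti; rewrite ub /=.
  apply: le_trans (@le_bigmax_cond _ _ _ 0 ord0 _ _ _); last exact: w0.
  by rewrite perm1 /Vv iC.
apply/le_anti; rewrite lb andbT.
apply: bigmax_le => // l wl.
rewrite perm1 /Vv iC.
case: eqP => // l0; exfalso; move/negP: w0; apply.
by rewrite -l0; exact: wl.
Qed.

Lemma nb_le1 (c : bool) : (c%:R : R) <= 1.
Proof. by case: c. Qed.
Lemma nb_ge0 (c : bool) : 0 <= (c%:R : R).
Proof. by case: c. Qed.

Lemma oneshot h i b' : (0 < size h)%N -> (size h < m)%N ->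
  (forall j, j != i -> b' j = bids_at strat h j) -> 0 <= b' i ->
  pu (rcons h b') i + gain (rcons h b') i <= pu h i + gain h i.
Proof.
move=> h0 hm hb' bi0.
rewrite pu_rcons.
set w := tie h b'.
have gE : gain (rcons h b') i = ((i \in unsat h :\ w) && isfree (rcons h b'))%:R.
  by rewrite /gain unsat_rcons.
have fE : isfree (rcons h b') = (#|unsat h :\ w| <= m - (size h).+1)%N.
  by rewrite /isfree unsat_rcons size_rcons.
rewrite gE /gain in_setD1.
case iU: (i \in unsat h); last first.
  have nv : newv h i = false.
    move: iU; rewrite /newv inE; case: ifP => iC /=; first by move/negbT; rewrite negbK => ->.
    by rewrite (negbTE (lt0n_neq0 h0)).
  rewrite nv !andbF /=.
  by case: (w == i); rewrite /= ?mulr1n ?mulr0n; lra.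
case fh: (isfree h).
  have g1 := nb_le1 ((i != w) && true && isfree (rcons h b')).
  have n1 := nb_le1 (newv h i).
  case: (eqVneq w i) => [ewi|ne]; rewrite /= ?mulr1n ?mulr0n.
    lra.
  have := nb_le1 (isfree (rcons h b')); lra.
have u2 : (0 < #|unsat h :\ i|)%N.
  move: fh; rewrite /isfree => /negbT; rewrite -ltnNge (cardsD1 i) iU /=. move: hm; set z := size h; set u := #|_|; lia.
case/card_gt0P: u2 => j; rewrite in_setD1 => /andP[ji jU].
have bj : b' j = 1 by rewrite hb' // bidsE // jU fh.
case: (eqVneq w i) => [ewi|ne]; rewrite /= ?mulr1n ?mulr0n.
  have : b' j <= b' i by rewrite -ewi; apply: tie_valid.
  have n1 := nb_le1 (newv h i).
  lra.
have -> : isfree (rcons h b') = false.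
  apply/negbTE; rewrite fE -ltnNge.
  move: fh; rewrite /isfree => /negbT; rewrite -ltnNge (cardsD1 w (unsat h)).
  move: hm; set z := size h; set u := #|_ :\ w|.
  case: (w \in unsat h) => /=; lia.
by rewrite ?andbF /= ?mulr0n; lra.
Qed.

End Eq2.


Section Eq3.
Variables (R : realType) (k : nat).
Local Notation m := k.+1.
Local Notation n := k.+2.
Local Notation prof := (profile R n).
Local Notation hist := (history R n).
Implicit Types (h : hist) (b : prof).
Local Notation strat := (@strat1 R k).
Local Notation tie := (@tie R k).
Local Notation unsat := (@unsat R k).
Local Notation isfree := (@isfree R k).
Local Notation pu := (@pu R k).
Local Notation gain := (@gain R k).
Local Notation newv := (@newv R k).

Lemma unsat0 : unsat [::] = [set~ ord_max].
Proof. by apply/setP => j; rewrite !inE andbT. Qed.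

Lemma card_unsat0 : #|unsat [::]| = m.
Proof. by rewrite unsat0 cardsC1 card_ord. Qed.

Lemma pu0 i : pu [::] i = 0.
Proof.
rewrite /pu /pay big_geq // /vb wonset0 inE /=.
by case: ifP; rewrite ?andFb /= subr0.
Qed.

Lemma newv0 i : newv [::] i.
Proof. by rewrite /newv wonset0 inE; case: ifP. Qed.

Lemma pu1 b i : pu [:: b] i = (tie [::] b == i)%:R * (1 - b i).
Proof. by rewrite -[ [:: b] ]/(rcons [::] b) pu_rcons pu0 newv0 add0r. Qed.

Lemma gain1 b i : gain [:: b] i =
  ((i \in [set~ ord_max] :\ tie [::] b) && (tie [::] b != ord_max))%:R.
Proof.
rewrite /gain -[ [:: b] ]/(rcons [::] b) unsat_rcons unsat0 /isfree unsat_rcons unsat0.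
rewrite size_rcons /= subn1 /=.
congr ((_ && _)%:R).
have := cardsD1 (tie [::] b) [set~ ord_max].
rewrite cardsC1 card_ord !inE /=.
set u := #|_ :\ _|.
by case: (tie [::] b != ord_max) => /=; lia.
Qed.

Lemma ord0_neq : (ord0 : 'I_n) != ord_max.
Proof. by rewrite -(inj_eq val_inj). Qed.

Lemma b0E j : bids_at strat [::] j = ((j == ord0) || (j == ord_max))%:R.
Proof. by rewrite ffunE. Qed.

Lemma w0E : tie [::] (bids_at strat [::]) = ord0.
Proof.
set b0 := bids_at strat [::].
have h0 : (ord0 : 'I_n) \notin @wonset R k [::] by rewrite /wonset /= inE.
have := @ch2 R k (wonset [::]) b0 ord0 ord0_neq h0.
have H1 : forall j', b0 j' <= b0 ord0.
  by move=> j'; rewrite !b0E eqxx /=; case: (_ || _).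
move=> /(_ H1) /andP [wC _].
have := @ch1 R k (@wonset R k [::]) b0 ord0.
rewrite -/(tie [::] b0) !b0E eqxx /=.
move: wC; set w := tie _ _ => wC.
rewrite (negbTE wC) orbF.
by case: eqP => // _ /=; rewrite ler10.
Qed.

Lemma oneshot0 i b' :
  (forall j, j != i -> b' j = bids_at strat [::] j) -> 0 <= b' i ->
  pu [:: b'] i + gain [:: b'] i <=
  pu [:: bids_at strat [::]] i + gain [:: bids_at strat [::]] i.
Proof.
move=> hb' bi0.
rewrite !pu1 !gain1 w0E ord0_neq andbT b0E.
set w := tie [::] b'.
have vt := @tie_valid R k [::] b'.
rewrite -/w in vt.
case: (eqVneq i ord0) => [ei0|ni0].
  subst i.
  have bB : b' ord_max = 1.
    by rewrite hb' ?b0E ?eqxx ?orbT // eq_sym ord0_neq.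
  have := vt ord_max; rewrite bB => hw.
  rewrite !inE eqxx /= ?mulr1n ?mulr0n.
  case: (eqVneq w ord0) => [ew|ne].
    by rewrite ew in hw; rewrite /= ?mulr1n ?mulr0n; lra.
  rewrite /= ?mulr0n.
  case: (eqVneq w ord_max) => [wB|nB] /=; first by rewrite ?mulr0n; lra.
  rewrite hb' ?b0E in hw; last by rewrite ne.
  by move: hw; rewrite (negbTE ne) (negbTE nB) /= ler10.
case: (eqVneq i ord_max) => [eiB|niB].
  subst i.
  rewrite !inE eqxx !andbF /= ?mulr0n.
  have b0' : b' ord0 = 1 by rewrite hb' ?b0E ?eqxx // ord0_neq.
  have := vt ord0; rewrite b0' => hw.
  case: (eqVneq w ord_max) => [ew|ne] /=; last by rewrite ?mulr0n; lra.
  rewrite ew in hw; rewrite ?mulr1n; lra.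
rewrite !inE eq_sym (negbTE ni0) niB /= ?mulr0n ?mulr1n.
have := @nb_le1 R ((i != w) && (w != ord_max)).
case: (eqVneq w i) => [ew|ne] /=; last by rewrite ?mulr0n; lra.
rewrite ?mulr1n ?mulr0n; lra.
Qed.

End Eq3.


Section Eq4.
Variables (R : realType) (k : nat).
Local Notation m := k.+1.
Local Notation n := k.+2.
Local Notation prof := (profile R n).
Local Notation hist := (history R n).
Implicit Types (h : hist) (b : prof).
Local Notation strat := (@strat1 R k).
Local Notation tie := (@tie R k).
Local Notation unsat := (@unsat R k).
Local Notation isfree := (@isfree R k).
Local Notation pu := (@pu R k).
Local Notation gain := (@gain R k).

Lemma util_play h i : (0 < size h)%N -> (size h <= m)%N ->
  utility (@Vv R k) 1%g tie (play m strat h) i = pu h i + gain h i.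
Proof.
by move=> h0 hm; rewrite utility_final ?size_play // play_pu.
Qed.

Lemma strat_SPE : SPE (@Vv R k) 1%g tie strat.
Proof.
split; first exact: strat_nn.
move=> h _ hm i d dnn.
move ej: (m - size h)%N => j.
elim: j h hm ej => [|j IH] h hm ej; first by lia.
set s' := update strat i d.
set b' := bids_at s' h.
have hb' : forall j1, j1 != i -> b' j1 = bids_at strat h j1.
  by move=> j1 ne; rewrite /b' !ffunE /s' /update (negbTE ne).
have bi : 0 <= b' i by rewrite /b' ffunE /s' /update eqxx; apply: dnn.
have step1 : utility (@Vv R k) 1%g tie (play m s' (rcons h b')) i <=
             utility (@Vv R k) 1%g tie (play m strat (rcons h b')) i.
  have [lt|ge] := ltnP (size (rcons h b')) m.
    apply: IH => //; rewrite size_rcons; lia.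
  have e : size (rcons h b') = m by rewrite size_rcons in ge *; lia.
  by rewrite !playE e subnn.
rewrite (play_step s' hm) -/s' /step -/b'.
apply: le_trans step1 _.
rewrite util_play ?size_rcons //.
case: (posnP (size h)) => [h0|h0].
  have eh : h = [::] by apply/nilP; rewrite /nilp h0.
  rewrite eh.
  rewrite (@play_step R n m strat [::] (ltn0Sn k)) /step util_play //.
  apply: oneshot0 => //.
  by move=> j1 ne; rewrite hb' // eh.
rewrite util_play //; last exact: ltnW.
exact: oneshot.
Qed.

Definition rv h : R := \sum_(0 <= l < size h) (nth [ffun=> 0] h l) (win tie h l).

Lemma rv_rcons h b : rv (rcons h b) = rv h + b (tie h b).
Proof.
rewrite /rv size_rcons big_nat_recr //=.
congr (_ + _).
  apply: eq_big_nat => l /andP[_ hl]; rewrite win_rcons_lt //.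
  by rewrite nth_rcons hl.
by rewrite win_rcons_eq nth_rcons ltnn eqxx.
Qed.

Lemma rv_play h : (0 < size h)%N -> (size h <= m)%N -> isfree h ->
  rv (play m strat h) = rv h.
Proof.
move=> h0 hm.
move ej: (m - size h)%N => j.
elim: j h h0 hm ej => [|j IH] h h0 hm ej fh; first by rewrite playE ej.
have hlt : (size h < m)%N by lia.
rewrite play_step // /step.
set b := bids_at strat h.
have bz : forall j1, b j1 = 0 by move=> j1; rewrite /b bidsE // fh andbF.
rewrite IH ?size_rcons //; last 2 first.
- lia.
- rewrite /isfree unsat_rcons size_rcons.
  case: (set_0Vmem (unsat h)) => [U0|[j0 hj0]].
    by rewrite U0 set0D cards0.
  have wU := tie_unsat h0 hj0.
  rewrite -/b in wU.
  rewrite (card_unsat_step wU).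
  move: fh; rewrite /isfree; move: hlt; set z := size h; set u := #|_|; lia.
- by rewrite rv_rcons bz addr0.
Qed.

Lemma revenue1 : eq_revenue m tie strat = 1.
Proof.
rewrite /eq_revenue (@play_step R n m strat [::] (ltn0Sn k)) /step.
have sH : size (play m strat [:: bids_at strat [::]]) = m by rewrite size_play.
have -> : @revenue R n m tie (play m strat [:: bids_at strat [::]]) =
          rv (play m strat [:: bids_at strat [::]]).
  by rewrite /revenue /rv sH big_mkord.
rewrite rv_play //.
  by rewrite -[ [:: _] ]/(rcons [::] _) rv_rcons /rv big_geq // add0r w0E b0E eqxx.
rewrite /isfree -[ [:: _] ]/(rcons [::] _) unsat_rcons unsat0 w0E size_rcons /= subn1 /=.
have := cardsD1 (ord0 : 'I_n) [set~ ord_max].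
rewrite cardsC1 card_ord !inE ord0_neq /=.
set u := #|_ :\ _|; lia.
Qed.

End Eq4.

(* Market index k stands for m = k+1 >= 1 items and m+1 = k+2 buyers. *)
Theorem mainTheorem12 (R : realType) :
  exists V : forall k : nat, 'I_k.+2 -> 'I_k.+1 -> R,
    (forall k i j, 0 <= V k i j) /\
    (forall eps : R, 0 < eps -> exists M : nat, forall k : nat, (M <= k)%N ->
        `|opt_welfare (V k) - k.+1%:R| <= eps) /\
    (forall k : nat, exists sigma1 sigma2 : {perm 'I_k.+1},
      (exists t : tie_rule R k.+2, valid_tie t /\
         exists s, SPE (V k) sigma1 t s /\ eq_revenue k.+1 t s = 1) /\
      (forall t : tie_rule R k.+2, valid_tie t ->
         forall s, SPE (V k) sigma2 t s -> k.+1%:R <= eq_revenue k.+1 t s)).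
Proof.
exists (fun k => @Vv R k); split; first by move=> k i j; apply: Vv_ge0.
split.
  move=> eps he; exists 0%N => k _.
  by rewrite opt_eq subrr normr0 ltW.
move=> k; exists 1%g, (sig2 k); split.
  exists (@tie R k); split; first exact: tie_valid.
  exists (@strat1 R k); split; first exact: strat_SPE.
  exact: revenue1.
by move=> t vt s hs; apply: sig2_rev.
Qed.
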